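(* Let $K$ be a finite oriented simplicial complex, let $d \geq 0$, and let $n$ be the number of $d$-simplices of $K$. Let ${\bm{B}}_d$ and ${\bm{B}}_{d+1}$ be the boundary matrices of $K$ in degrees $d$ and $d+1$ (with ${\bm{B}}_0 = 0$ and ${\bm{B}}_{d+1}=0$ if $K$ has no $(d+1)$-simplices). Let $F, F', Z$ be positive integers and, for each head $z \in \{1,\dots,Z\}$, fix matrices ${\bm{W}}^{z}_1, {\bm{W}}^{z}_2 \in \mathbb{R}^{F' \times F}$, functions $a^{z}_1, a^{z}_2 : \mathbb{R}^{F'} \times \mathbb{R}^{F'} \to \mathbb{R}$ and a function $\phi^{z} : \mathbb{R}^{F'} \times \mathbb{R}^{F'} \to \mathbb{R}^{G}$. Assume that for every $z$ and $i\in\{1,2\}$, $a^z_i$ is even in each argument separately, i.e. $a^z_i(-u,v) = a^z_i(u,v) = a^z_i(u,-v)$ for all $u,v$, and that $\phi^z$ is odd, i.e. $\phi^z(-x,-y) = -\phi^z(x,y)$ for all $x,y$. Let $f$ be the SAT layer defined below, mapping a feature matrix ${\bm{H}} \in \mathbb{R}^{n\times F}$ (rows indexed by the $d$-simplices) together with $({\bm{B}}_d, {\bm{B}}_{d+1})$ to $f({\bm{H}}, {\bm{B}}_d, {\bm{B}}_{d+1}) \in \mathbb{R}^{n \times ZG}$. Then $f$ is orientation equivariant: for every diagonal matrix ${\bm{T}} \in \mathbb{R}^{n\times n}$ with diagonal entries in $\{\pm 1\}$, $$f({\bm{T}}{\bm{H}}, {\bm{B}}_d{\bm{T}}, {\bm{T}}{\bm{B}}_{d+1})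 = {\bm{T}}\, f({\bm{H}}, {\bm{B}}_d, {\bm{B}}_{d+1}).$$
   Context: Boundary matrices: for an oriented simplex $[v_0,\dots,v_k]$, $\partial_k [v_0,\dots,v_k] = \sum_{i=0}^k (-1)^i [v_0,\dots,\hat v_i,\dots,v_k]$, where two orderings of the vertices represent the same oriented simplex if they differ by an even permutation and the negative of each other if they differ by an odd permutation; ${\bm{B}}_k$ is the matrix of $\partial_k$ with rows indexed by the (chosen oriented) $(k-1)$-simplices and columns by the $k$-simplices. Multiplying ${\bm{B}}_d$ on the right by ${\bm{T}}$ and ${\bm{B}}_{d+1}$ on the left by ${\bm{T}}$ corresponds to reversing the orientation of those $d$-simplices whose diagonal entry in ${\bm{T}}$ is $-1$. Neighbourhoods (purely combinatorial, independent of orientations): for a $d$-simplex $\sigma$, ${\mathcal{N}}^{\uparrow}_\sigma$ is the set consisting of $\sigma$ together with all $d$-simplices $\tau \ne \sigma$ such that $\sigma$ and $\tau$ are both faces of a common $(d+1)$-simplex (upper adjacent); ${\mathcal{N}}^{\downarrow}_\sigma$ is the set consisting of $\sigma$ together with all $d$-simplices $\tau\neq\sigma$ sharing a common $(d-1)$-dimensional face with $\sigma$ (lower adjacent). Relative orientations: set $o^{\uparrow}_{\sigma,\sigma} = o^{\downarrow}_{\sigma,\sigma} = 1$; for $\tau \in {\mathcal{N}}^{\uparrow}_\sigma\setminus\{\sigma\}$ set $o^{\uparrow}_{\sigma,\tau} = ({\bm{B}}_{d+1}{\bm{B}}_{d+1}^\top)_{\sigma\tau} \in \{\pm1\}$,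 and for $\tau \in {\mathcal{N}}^{\downarrow}_\sigma\setminus\{\sigma\}$ set $o^{\downarrow}_{\sigma,\tau} = ({\bm{B}}_{d}^\top{\bm{B}}_{d})_{\sigma\tau} \in \{\pm1\}$ (two distinct $d$-simplices share at most one common coface and at most one common face, so these entries are $\pm1$). SAT layer: writing ${\bm{h}}_\sigma \in \mathbb{R}^F$ for the row of ${\bm{H}}$ indexed by $\sigma$, the attention coefficients of head $z$ are $$\alpha^{\uparrow,z}_{\sigma,\tau} = o^{\uparrow}_{\sigma,\tau}\cdot \frac{\exp\big(a^z_1({\bm{W}}^z_1{\bm{h}}_\sigma, {\bm{W}}^z_1{\bm{h}}_\tau)\big)}{\sum_{\rho\in{\mathcal{N}}^{\uparrow}_\sigma}\exp\big(a^z_1({\bm{W}}^z_1{\bm{h}}_\sigma, {\bm{W}}^z_1{\bm{h}}_\rho)\big)}, \quad \tau\in{\mathcal{N}}^{\uparrow}_\sigma,$$ $$\alpha^{\downarrow,z}_{\sigma,\tau} = o^{\downarrow}_{\sigma,\tau}\cdot \frac{\exp\big(a^z_2({\bm{W}}^z_2{\bm{h}}_\sigma, {\bm{W}}^z_2{\bm{h}}_\tau)\big)}{\sum_{\rho\in{\mathcal{N}}^{\downarrow}_\sigma}\exp\big(a^z_2({\bm{W}}^z_2{\bm{h}}_\sigma, {\bm{W}}^z_2{\bm{h}}_\rho)\big)}, \quad \tau\in{\mathcal{N}}^{\downarrow}_\sigma,$$ and the output row indexed by $\sigma$ is the concatenation over $z=1,\dots,Z$ of $$\phi^z\Big(\sum_{\tau\in{\mathcal{N}}^{\uparrow}_\sigma}\alpha^{\uparrow,z}_{\sigma,\tau}{\bm{W}}^z_1{\bm{h}}_\tau,\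 \sum_{\tau\in{\mathcal{N}}^{\downarrow}_\sigma}\alpha^{\downarrow,z}_{\sigma,\tau}{\bm{W}}^z_2{\bm{h}}_\tau\Big).$$ (When the orientations and boundary matrices change as in the claim, the coefficients $o$ are recomputed from the new boundary matrices.) *)

(* Defs.v *)
From HB Require Import structures.
From mathcomp Require Import all_boot all_order all_algebra.
From mathcomp Require Import reals.
From mathcomp.analysis Require Import sequences exp.
Set Implicit Arguments. Unset Strict Implicit. Unset Printing Implicit Defensive.
Import Order.TTheory GRing.Theory Num.Theory.
Local Open Scope ring_scope.

Definition simplicial_complex (N : nat) (K : {set {set 'I_N}}) : Prop :=
  (forall sg, sg \in K -> sg != set0) /\
  (forall sg tau : {set 'I_N}, sg \in K -> tau \subset sg -> tau != set0 -> tau \in K).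

(* The simplices of K with exactly k vertices (i.e. the (k-1)-simplices). *)
Definition cells (N : nat) (K : {set {set 'I_N}}) (k : nat) : {set {set 'I_N}} :=
  [set sg in K | #|sg| == k].

Definition cell (N : nat) (K : {set {set 'I_N}}) (k : nat)
  (i : 'I_#|cells K k|) : {set 'I_N} := enum_val i.

(* Orientation: an oriented simplicial complex is given by a sign
   s sg : bool for every simplex; the chosen oriented simplex for sg is
   [v_0,...,v_k] (vertices in increasing order) if s sg = false and
   -[v_0,...,v_k] if s sg = true.  (Every orientation is of this form.)
   Incidence coefficient of the oriented face tau in the boundary of the
   oriented simplex sg: if tau = sg minus its i-th vertex (0-based, increasing
   order), it is (-1)^i * (sign of tau) * (sign of sg); otherwise 0. *)
Definition incidence (R : pzRingType) (N : nat) (s : {set 'I_N} -> bool)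
  (tau sg : {set 'I_N}) : R :=
  if (tau \subset sg) && (#|sg| == #|tau|.+1) then
    match [pick v in sg :\: tau] with
    | Some v => (-1) ^+ (#|[set u in sg | (u < v)%N]| + s tau + s sg)
    | None => 0
    end
  else 0.

(* Boundary matrix B_k (k >= 0) : rows = (k-1)-simplices (k vertices),
   columns = k-simplices (k+1 vertices).  B_0 has zero rows (no (-1)-simplices),
   i.e. B_0 = 0. *)
Definition boundary (R : pzRingType) (N : nat) (K : {set {set 'I_N}})
  (s : {set 'I_N} -> bool) (k : nat) :
  'M[R]_(#|cells K k|, #|cells K k.+1|) :=
  \matrix_(i, j) incidence R s (cell i) (cell j).

Section SAT.
Variables (R : realType) (N : nat) (K : {set {set 'I_N}}) (d : nat).
Let n := #|cells K d.+1|.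
Variables (F F' G Z : nat).

Definition upN (i : 'I_n) : {set 'I_n} :=
  [set j | (j == i) ||
     [exists rho in cells K d.+2, (cell i \subset rho) && (cell j \subset rho)]].

Definition downN (i : 'I_n) : {set 'I_n} :=
  [set j | (j == i) ||
     [exists rho in cells K d, (rho \subset cell i) && (rho \subset cell j)]].

Variables (m p : nat) (Bd : 'M[R]_(m, n)) (Bu : 'M[R]_(n, p)) (H : 'M[R]_(n, F)).
Variables (W1 W2 : 'I_Z -> 'M[R]_(F', F))
          (a1 a2 : 'I_Z -> 'cV[R]_F' -> 'cV[R]_F' -> R)
          (phi : 'I_Z -> 'cV[R]_F' -> 'cV[R]_F' -> 'cV[R]_G).

Definition o_up (i j : 'I_n) : R := if i == j then 1 else (Bu *m Bu^T) i j.
Definition o_down (i j : 'I_n) : R := if i == j then 1 else (Bd^T *m Bd) i j.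

Definition Wh (W : 'M[R]_(F', F)) (i : 'I_n) : 'cV[R]_F' := W *m (row i H)^T.

Definition alpha_up (z : 'I_Z) (i j : 'I_n) : R :=
  o_up i j * (expR (a1 z (Wh (W1 z) i) (Wh (W1 z) j)) /
     \sum_(k in upN i) expR (a1 z (Wh (W1 z) i) (Wh (W1 z) k))).

Definition alpha_down (z : 'I_Z) (i j : 'I_n) : R :=
  o_down i j * (expR (a2 z (Wh (W2 z) i) (Wh (W2 z) j)) /
     \sum_(k in downN i) expR (a2 z (Wh (W2 z) i) (Wh (W2 z) k))).

Definition msg_up (z : 'I_Z) (i : 'I_n) : 'cV[R]_F' :=
  \sum_(j in upN i) alpha_up z i j *: Wh (W1 z) j.

Definition msg_down (z : 'I_Z) (i : 'I_n) : 'cV[R]_F' :=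
  \sum_(j in downN i) alpha_down z i j *: Wh (W2 z) j.

(* SAT layer: row sigma of the output is the concatenation over heads
   z = 0..Z-1 of phi^z(msg_up, msg_down) (block z occupies columns z*G..z*G+G-1). *)
Definition sat_layer : 'M[R]_(n, Z * G) :=
  \matrix_(i < n)
     mxvec (\matrix_(z < Z) (phi z (msg_up z i) (msg_down z i))^T).

End SAT.

(* Main.v *)
Require Import Defs.
From HB Require Import structures.
From mathcomp Require Import all_boot all_order all_algebra.
From mathcomp Require Import reals.
From mathcomp.analysis Require Import sequences exp.
From mathcomp Require Import ring.
Import Order.TTheory GRing.Theory Num.Theory.
Local Open Scope ring_scope.

Lemma mulT_l (R : pzSemiRingType) n p (T : 'M[R]_n) (M : 'M[R]_(n,p)) i j :
  is_diag_mx T -> (T *m M) i j = T i i * M i j.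
Proof.
move=> /is_diag_mxP hT; rewrite mxE (bigD1 i) //= big1 ?addr0 // => k hk.
by rewrite hT ?mul0r // eq_sym.
Qed.

Lemma mulT_r (R : pzSemiRingType) n p (T : 'M[R]_n) (M : 'M[R]_(p,n)) i j :
  is_diag_mx T -> (M *m T) i j = M i j * T j j.
Proof.
move=> /is_diag_mxP hT; rewrite mxE (bigD1 j) //= big1 ?addr0 // => k hk.
by rewrite hT ?mulr0.
Qed.

Lemma rowT (R : pzSemiRingType) n p (T : 'M[R]_n) (M : 'M[R]_(n,p)) i :
  is_diag_mx T -> row i (T *m M) = T i i *: row i M.
Proof.
move=> /is_diag_mxP hT; apply/rowP => j; rewrite !mxE (bigD1 i) //= big1 ?addr0 // => k hk.
by rewrite hT ?mul0r // eq_sym.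
Qed.

Lemma even_sc (R : realType) F' (a : 'cV[R]_F' -> 'cV[R]_F' -> R)
  (ha : forall u v, a (- u) v = a u v /\ a u (- v) = a u v) c e u v :
  (c = 1 \/ c = -1) -> (e = 1 \/ e = -1) -> a (c *: u) (e *: v) = a u v.
Proof.
by move=> [->|->] [->|->]; rewrite ?scale1r ?scaleN1r ?(proj1 (ha _ _)) ?(proj2 (ha _ _)).
Qed.

Theorem proposition1 (R : realType) (N : nat) (K : {set {set 'I_N}})
  (hK : simplicial_complex K) (s : {set 'I_N} -> bool) (d : nat)
  (F F' G Z : nat) (hF : (0 < F)%N) (hF' : (0 < F')%N) (hZ : (0 < Z)%N)
  (W1 W2 : 'I_Z -> 'M[R]_(F', F))
  (a1 a2 : 'I_Z -> 'cV[R]_F' -> 'cV[R]_F' -> R)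
  (phi : 'I_Z -> 'cV[R]_F' -> 'cV[R]_F' -> 'cV[R]_G)
  (ha1 : forall z (u v : 'cV[R]_F'), a1 z (- u) v = a1 z u v /\ a1 z u (- v) = a1 z u v)
  (ha2 : forall z (u v : 'cV[R]_F'), a2 z (- u) v = a2 z u v /\ a2 z u (- v) = a2 z u v)
  (hphi : forall z (x y : 'cV[R]_F'), phi z (- x) (- y) = - phi z x y)
  (H : 'M[R]_(#|cells K d.+1|, F))
  (T : 'M[R]_#|cells K d.+1|)
  (hTdiag : is_diag_mx T) (hTpm : forall i, T i i = 1 \/ T i i = -1) :
  let Bd := boundary R K s d in
  let Bu := boundary R K s d.+1 in
  sat_layer (Bd *m T) (T *m Bu) (T *m H) W1 W2 a1 a2 phi
  = T *m sat_layer Bd Bu H W1 W2 a1 a2 phi.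
Proof.
move=> Bd Bu.
have tt i : T i i * T i i = 1 by case: (hTpm i) => ->; rewrite ?mulrNN mulr1.
have hWh W i : Wh (T *m H) W i = T i i *: Wh H W i.
  by rewrite /Wh rowT // linearZ /= linearZ.
have hou i j : o_up (T *m Bu) i j = T i i * T j j * o_up Bu i j.
  rewrite /o_up; case: eqP => [->|_]; first by rewrite tt mulr1.
  rewrite trmx_mul mulmxA mulT_r ?is_diag_trmx // -mulmxA mulT_l //.
  by rewrite [T^T j j]mxE mulrAC.
have hod i j : o_down (Bd *m T) i j = T i i * T j j * o_down Bd i j.
  rewrite /o_down; case: eqP => [->|_]; first by rewrite tt mulr1.
  rewrite trmx_mul mulmxA mulT_r // -mulmxA mulT_l ?is_diag_trmx //.
  by rewrite [T^T i i]mxE mulrAC.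
have hmu z i : msg_up (T *m Bu) (T *m H) W1 a1 z i = T i i *: msg_up Bu H W1 a1 z i.
  rewrite /msg_up scaler_sumr; apply: eq_bigr => j _.
  rewrite /alpha_up hou !hWh !even_sc //.
  under eq_bigr do rewrite hWh even_sc //.
  rewrite scalerA scalerA; congr (_ *: _).
  have := tt j; move: (T j j) => b hb.
  by rewrite -[X in _ = _ * X]mul1r -[1 in RHS]hb; ring.
have hmd z i : msg_down (Bd *m T) (T *m H) W2 a2 z i = T i i *: msg_down Bd H W2 a2 z i.
  rewrite /msg_down scaler_sumr; apply: eq_bigr => j _.
  rewrite /alpha_down hod !hWh !even_sc //.
  under eq_bigr do rewrite hWh even_sc //.
  rewrite scalerA scalerA; congr (_ *: _).
  have := tt j; move: (T j j) => b hb.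
  by rewrite -[X in _ = _ * X]mul1r -[1 in RHS]hb; ring.
have hph z i x y : phi z (T i i *: x) (T i i *: y) = T i i *: phi z x y.
  by case: (hTpm i) => ->; rewrite ?scale1r ?scaleN1r // hphi.
apply/matrixP => i j; rewrite mulT_l //.
rewrite /sat_layer !mxE.
have -> : (\matrix_z (phi z (msg_up (T *m Bu) (T *m H) W1 a1 z i)
            (msg_down (Bd *m T) (T *m H) W2 a2 z i))^T : 'M[R]_(Z, G))
        = T i i *: \matrix_z (phi z (msg_up Bu H W1 a1 z i) (msg_down Bd H W2 a2 z i))^T.
  by apply/matrixP => a b; rewrite !mxE hmu hmd hph mxE.
by rewrite linearZ /= mxE.
Qed.
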